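(* Let $n$ be a power of two, $\Delta=50+1000\log n$, and let $X$ be uniformly random over $\{0,1\}^n$. Then with probability at least $1/2$, every segment $z^X_i$ ($i=1,\dots,\ell_X$) of the marker segmentation of $X$ has length at most $\Delta$.
   Context: Logarithms are base $2$. Marker segmentation of $x\in\{0,1\}^n$: split $x$ into consecutive substrings $z^x_1,\dots,z^x_{\ell_x}$ by cutting immediately after each occurrence of the marker $0011$; every segment except possibly the last ends with $0011$ and contains exactly one occurrence of $0011$, and the last segment is the (possibly marker-free) remainder if nonempty. *)

(* Defs.v *)
From mathcomp Require Import all_boot all_order all_algebra.
Set Implicit Arguments. Unset Strict Implicit. Unset Printing Implicit Defensive.

(* The marker 0011 (false = 0, true = 1). *)
Definition marker : seq bool := [:: false; false; true; true].

Definition marker_at (s : seq bool) (j : nat) : bool :=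
  take 4 (drop j s) == marker.

(* Marker segmentation: cut immediately after each occurrence of 0011
   (scanning left to right; occurrences of 0011 cannot overlap).
   The fuel argument is only for termination; [marker_segments] uses
   fuel = size s, which is always enough. *)
Fixpoint segs_aux (fuel : nat) (s : seq bool) : seq (seq bool) :=
  match fuel with
  | 0 => if s is [::] then [::] else [:: s]
  | fuel'.+1 =>
      let i := find (marker_at s) (iota 0 (size s)) in
      if i < size s then take (i + 4) s :: segs_aux fuel' (drop (i + 4) s)
      else if s is [::] then [::] else [:: s]
  end.

Definition marker_segments (s : seq bool) : seq (seq bool) :=
  segs_aux (size s) s.

Definition short_segments (Delta : nat) (s : seq bool) : bool :=
  all (fun z => size z <= Delta) (marker_segments s).

Example seg_ex1 :
  marker_segments [:: true; false; false; true; true; false; true; false; false; true; true; true]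
  = [:: [:: true; false; false; true; true]; [:: false; true; false; false; true; true]; [:: true]].
Proof. by []. Qed.
Example seg_ex2 : marker_segments [:: false; false; true; true] = [:: [:: false; false; true; true]].
Proof. by []. Qed.

(* Main.v *)
Require Import Defs.
From mathcomp Require Import all_boot all_order all_algebra.
From mathcomp Require Import zify.

Fixpoint allseqs (n : nat) : seq (seq bool) :=
  if n is n'.+1 then map (cons false) (allseqs n') ++ map (cons true) (allseqs n')
  else [:: [::]].

Lemma cons_inj (b : bool) : injective (cons b).
Proof. by move=> x y []. Qed.

Lemma notin_map_cons (b c : bool) s l : b != c -> (b :: s \in map (cons c) l) = false.
Proof. move=> bc; apply/mapP => -[x _ [E]]; by rewrite E eqxx in bc. Qed.

Lemma mem_allseqs n s : (s \in allseqs n) = (size s == n).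
Proof.
elim: n s => [|n IH] [|b s] //=.
- rewrite mem_cat. apply/negbTE; rewrite negb_or; apply/andP; split; apply/mapP; by move=> [].
rewrite mem_cat eqSS; case: b.
- by rewrite (@notin_map_cons true false) // (mem_map (@cons_inj true)) IH.
- by rewrite (@notin_map_cons false true) // (mem_map (@cons_inj false)) IH orbF.
Qed.

Lemma uniq_allseqs n : uniq (allseqs n).
Proof.
elim: n => [|n IH] //=.
rewrite cat_uniq !map_inj_uniq //; try apply: cons_inj.
rewrite IH andbT; apply/hasPn => x /mapP [y _ ->]. by rewrite notin_map_cons.
Qed.

Lemma size_allseqs n : size (allseqs n) = 2 ^ n.
Proof. elim: n => [|n IH] //=; rewrite size_cat !size_map IH expnS; lia. Qed.

Lemma cardcount (T : finType) (P : pred T) : #|[set x | P x]| = count P (enum T).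
Proof. rewrite cardsE cardE /enum_mem size_filter. rewrite /(enum T) /enum_mem filter_predT. by []. Qed.

Lemma card_count n (P : pred (seq bool)) :
  #|[set x : n.-tuple bool | P x]| = count P (allseqs n).
Proof.
rewrite cardcount (eq_count (a2 := preim val P)) // -count_map.
apply/permP; apply: uniq_perm.
- rewrite map_inj_uniq; last exact: val_inj. by rewrite enum_uniq.
- exact: uniq_allseqs.
move=> s; rewrite mem_allseqs; apply/mapP/idP.
- by move=> [x _ ->]; rewrite size_tuple.
- move=> H; exists (Tuple H) => //. by rewrite mem_enum.
Qed.

Lemma count_split a b (P Q : pred (seq bool)) :
  count (fun s => P (take a s) && Q (drop a s)) (allseqs (a + b)) =
  count P (allseqs a) * count Q (allseqs b).
Proof.
elim: a P => [|a IH] P /=.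
- rewrite addn0 /=. rewrite (eq_count (a2 := fun s => P [::] && Q s)); last by move=> s; rewrite take0 drop0.
  by case: (P [::]); rewrite /= ?count_pred0 ?addn0 ?add0n ?mul1n // (eq_count (a2:=Q)).
rewrite !count_cat !count_map mulnDl.
rewrite -(IH (fun s => P (false :: s))) -(IH (fun s => P (true :: s))). by [].
Qed.

Lemma count_split' a b (P Q R : pred (seq bool)) :
  (forall s, R s = P (take a s) && Q (drop a s)) ->
  count R (allseqs (a + b)) = count P (allseqs a) * count Q (allseqs b).
Proof. by move=> H; rewrite -count_split; apply: eq_count. Qed.

Fixpoint Qb (m : nat) (y : seq bool) : bool :=
  if m is m'.+1 then (take 4 y != marker) && Qb m' (drop 4 y) else true.

Lemma count_Qb m : count (Qb m) (allseqs (4 * m)) = 15 ^ m.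
Proof.
elim: m => [|m IH] //.
rewrite mulnS (count_split 4 (4 * m) (fun t => t != marker) (Qb m)) IH expnS.
by [].
Qed.

Lemma count_window n p m : p + 4 * m <= n ->
  count (fun s => Qb m (take (4 * m) (drop p s))) (allseqs n) = 2 ^ p * 15 ^ m * 2 ^ (n - p - 4 * m).
Proof.
move=> H.
have E : n = p + (4 * m + (n - p - 4 * m)) by lia.
rewrite {1}E.
rewrite (count_split' p _ predT (fun w => Qb m (take (4 * m) w))) //.
rewrite (count_split' (4 * m) _ (Qb m) predT); last by move=> s; rewrite andbT.
rewrite !count_predT !size_allseqs count_Qb mulnA. by [].
Qed.

Lemma nomark_before s j : j < find (marker_at s) (iota 0 (size s)) -> ~~ marker_at s j.
Proof.
move=> H.
have Hj : j < size s.
  apply: (leq_trans H); have := find_size (marker_at s) (iota 0 (size s)); by rewrite size_iota.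
have := before_find 0 H. by rewrite nth_iota // add0n => ->.
Qed.

Lemma marker_at_drop s i j : marker_at (drop i s) j = marker_at s (i + j).
Proof. by rewrite /marker_at drop_drop addnC. Qed.

Lemma seg_long fuel s z D : size s <= fuel -> z \in segs_aux fuel s -> D < size z ->
  exists p, p + D < size s /\ forall j, j + 4 <= D -> ~~ marker_at s (p + j).
Proof.
elim: fuel s => [|fuel IH] s Hs.
  by move: Hs; rewrite leqn0 => /nilP -> /=.
rewrite /=.
set i := find _ _.
case: ifP => Hi.
  rewrite inE => /orP [/eqP -> | Hz] HD.
    exists 0; split.
      by apply: (leq_trans HD); rewrite size_take_min geq_minr.
    move=> j Hj; apply: nomark_before; rewrite add0n.
    move: HD; rewrite size_take_min -/i; clearbody i; lia.
  have Hs' : size (drop (i + 4) s) <= fuel by rewrite size_drop; lia.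
  have [p [Hp Hm]] := IH _ Hs' Hz HD.
  exists (i + 4 + p); split.
    by move: Hp; rewrite size_drop; lia.
  by move=> j Hj; rewrite -addnA -marker_at_drop; apply: Hm.
have Hall : forall j, j < size s -> ~~ marker_at s j.
  move=> j Hj; apply: nomark_before; rewrite -/i; move: Hi => /negbT; rewrite -leqNgt; clearbody i; lia.
move=> Hz HD.
have Zs : z = s by move: Hz; case: (s) => [|b s'] //=; rewrite inE => /eqP.
exists 0; split; first by rewrite -Zs.
move=> j Hj; apply: Hall; rewrite add0n; move: HD; rewrite Zs; lia.
Qed.

Definition W (m p : nat) (s : seq bool) := Qb m (take (4 * m) (drop p s)).

Lemma Qb_intro m y : (forall b, b < m -> take 4 (drop (4 * b) y) != marker) -> Qb m y.
Proof.
elim: m y => [|m IH] y H //=.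
apply/andP; split; first by have := H 0 isT; rewrite muln0 drop0.
apply: IH => b Hb. rewrite drop_drop. have := H b.+1 Hb. by rewrite mulnS addnC.
Qed.

Lemma bad_window D m s : 4 * m <= D -> ~~ short_segments D s ->
  exists p, p + D < size s /\ W m p s.
Proof.
move=> HmD /allPn [z Hz Hsz].
rewrite -ltnNge in Hsz.
have [p [Hp Hm]] := seg_long _ _ _ _ (leqnn (size s)) Hz Hsz.
exists p; split => //.
apply: Qb_intro => b Hb.
have E : 4 * m = (4 * m - 4 * b) + 4 * b by lia.
rewrite E -take_drop take_takel; last by lia.
rewrite drop_drop.
have H4 : 4 * b + 4 <= D by lia.
by have := Hm _ H4; rewrite /marker_at [p + _]addnC.
Qed.

Lemma count_in_sub (T : eqType) (a b : pred T) l :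
  (forall x, x \in l -> a x -> b x) -> count a l <= count b l.
Proof.
elim: l => [|x l IH] H //=.
apply: leq_add; last by apply: IH => y Hy; apply: H; rewrite inE Hy orbT.
by case Ha: (a x) => //; rewrite (H x) // inE eqxx.
Qed.

Lemma union_bound (F : nat -> pred (seq bool)) N c l :
  (forall p, p < N -> count (F p) l <= c) ->
  count (fun s => has (fun p => F p s) (iota 0 N)) l <= N * c.
Proof.
elim: N => [|N IH] H.
  by rewrite (eq_count (a2 := pred0)) ?count_pred0.
rewrite (eq_count (a2 := predU (fun s => has (fun p => F p s) (iota 0 N)) (F N))); last first.
  by move=> s; rewrite -addn1 iotaD has_cat /= orbF.
apply: (leq_trans (leq_addr (count (predI (fun s => has (fun p => F p s) (iota 0 N)) (F N)) l) _)).
rewrite count_predUI mulSn addnC.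
apply: leq_add; first by apply: H.
by apply: IH => p Hp; apply: H; apply: ltnW.
Qed.

Lemma key16 : 2 * 15 ^ 16 <= 16 ^ 16.
Proof. lia. Qed.

Lemma powkey j r : 2 ^ j * 15 ^ (16 * j + r) <= 16 ^ (16 * j + r).
Proof.
elim: j => [|j IH].
  rewrite mul1n muln0 add0n; elim: r => [|r IHr] //.
  by rewrite !expnS leq_mul.
rewrite mulnS -addnA expnD expnS [16 ^ (16 + _)]expnD mulnACA.
apply: leq_mul; last exact: IH.
exact: key16.
Qed.

From mathcomp Require Import lra.
Import GRing.Theory Num.Theory.
Local Open Scope ring_scope.

Theorem lemma6 (k : nat) :
  (1 / 2 : rat) <=
    (#|[set x : (2 ^ k)%N.-tuple bool
          | short_segments (50 + 1000 * k)%N x]|)%:R / (2 ^ (2 ^ k))%N%:R.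
Proof.
rewrite card_count.
set n := (2 ^ k)%N; set D := (50 + 1000 * k)%N; pose m := (12 + 250 * k)%N.
have En : n = (2 ^ k)%N by []. have ED : D = (50 + 1000 * k)%N by []. have Em : m = (12 + 250 * k)%N by [].
clearbody n D m.
set G := count (short_segments D) (allseqs n).
set B := count (predC (short_segments D)) (allseqs n).
have Hsum : (G + B = 2 ^ n)%N by rewrite /G /B count_predC size_allseqs.
have Hbad : (B <= (n - D) * (15 ^ m * 2 ^ (n - 4 * m)))%N.
  apply: leq_trans (union_bound (fun p => W m p) (n - D) _ _ _).
  - apply: count_in_sub => s; rewrite mem_allseqs => /eqP Hs Hb.
    have [|p [Hp HW]] := bad_window D m s _ Hb; first by lia.
    apply/hasP; exists p => //; rewrite mem_iota. move: Hp; rewrite Hs; lia.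
  - move=> p Hp; rewrite /W count_window; last by lia.
    rewrite mulnAC -expnD mulnC leq_mul2l; apply/orP; right.
    rewrite leq_exp2l //. lia.
have HT : (2 ^ n <= 2 * G)%N.
  case: (leqP n D) => HnD.
    have : (n - D = 0)%N by lia.
    move=> E; rewrite E mul0n leqn0 in Hbad; move/eqP: Hbad => Hb0.
    by rewrite -Hsum Hb0 addn0 leq_pmull.
  have k1 : (0 < k)%N.
    rewrite lt0n; apply/eqP => K0; move: HnD; rewrite En ED K0 expn0; lia.
  have H4m : (4 * m <= n)%N by lia.
  have E2 : (2 ^ n = 16 ^ m * 2 ^ (n - 4 * m))%N.
    by rewrite -{1}(subnK H4m) expnD mulnC expnM.
  have Hpk : (2 * n * 15 ^ m <= 16 ^ m)%N.
    have Em' : m = (16 * k.+1 + (m - 16 * k.+1))%N by lia.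
    rewrite Em' En; have := powkey k.+1 (m - 16 * k.+1); by rewrite expnS.
  have H2B : (2 * B <= 16 ^ m * 2 ^ (n - 4 * m))%N.
    apply: (leq_trans (leq_mul (leqnn 2) Hbad)).
    rewrite mulnA mulnA leq_mul2r; apply/orP; right.
    apply: leq_trans Hpk; rewrite leq_mul2r leq_mul2l; apply/orP; right; apply/orP; right. 
    exact: leq_subr.
  move: Hsum H2B; rewrite E2; set X := (16 ^ m * 2 ^ (n - 4 * m))%N; lia.
have Tpos : (0 : rat) < (2 ^ n)%N%:R by rewrite ltr0n expn_gt0.
rewrite ler_pdivlMr //.
have : ((2 ^ n)%N%:R <= 2 * G%:R :> rat) by rewrite -natrM ler_nat.
lra.
Qed.
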